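(* For any time warps $f,g,h$: (a) $f\backslash(g\wedge h)=(f\backslash g)\wedge(f\backslash h)$; (b) $(g\wedge h)\backslash f=(g\backslash f)\vee(h\backslash f)$; (c) $f\backslash(g\vee h)=(f\backslash g)\vee(f\backslash h)$; (d) $(g\vee h)\backslash f=(g\backslash f)\wedge(h\backslash f)$; (e) $(g\wedge h)/f=(g/f)\wedge(h/f)$; (f) $f/(g\wedge h)=(f/g)\vee(f/h)$; (g) $(g\vee h)/f=(g/f)\vee(h/f)$; (h) $f/(g\vee h)=(f/g)\wedge(f/h)$.
   Context: Let $\overline{\omega}=\omega\cup\{\omega\}$ be the natural numbers with a top element $\omega$ adjoined, with its natural total order. A time warp is a monotone map $f\colon\overline{\omega}\to\overline{\omega}$ with $f(0)=0$ and $f(\omega)=\bigvee\{f(n)\mid n\in\omega\}$. The set $W$ of time warps is ordered pointwise, with $\wedge,\vee$ the pointwise meet and join, and $fg:=f\circ g$. The residuals $\backslash,/$ are the binary operations on $W$ satisfying, for all $f,g,h\in W$: $f\le h/g \iff fg\le h \iff g\le f\backslash h$. *)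

(* Defs.v *)
From Stdlib Require Import Arith Lia Classical.

Inductive nbar : Type := Fin (n : nat) | Om.

Definition nle (x y : nbar) : Prop :=
  match x, y with
  | _, Om => True
  | Om, Fin _ => False
  | Fin a, Fin b => a <= b
  end.

Definition nmin (x y : nbar) : nbar :=
  match x, y with
  | Om, y => y
  | x, Om => x
  | Fin a, Fin b => Fin (Nat.min a b)
  end.

Definition nmax (x y : nbar) : nbar :=
  match x, y with
  | Om, _ => Om
  | _, Om => Om
  | Fin a, Fin b => Fin (Nat.max a b)
  end.

Definition is_sup (u : nat -> nbar) (v : nbar) : Prop :=
  (forall n, nle (u n) v) /\ (forall w, (forall n, nle (u n) w) -> nle v w).

Record warp : Type := Warp {
  wfun :> nbar -> nbar;
  wmono : forall x y, nle x y -> nle (wfun x) (wfun y);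
  wzero : wfun (Fin 0) = Fin 0;
  wsup : is_sup (fun n => wfun (Fin n)) (wfun Om)
}.

Definition wle (f g : warp) : Prop := forall x, nle (f x) (g x).

Definition comp_le (f g h : warp) : Prop := forall x, nle (f (g x)) (h x).

Lemma nle_total x y : nle x y \/ nle y x.
Proof. destruct x, y; simpl; auto; lia. Qed.

Lemma nle_trans x y z : nle x y -> nle y z -> nle x z.
Proof. destruct x, y, z; simpl; auto; try lia; tauto. Qed.

Lemma nle_min x y z : nle z x -> nle z y -> nle z (nmin x y).
Proof. destruct x, y, z; simpl; auto; lia. Qed.

Lemma nmin_l x y : nle (nmin x y) x.
Proof. destruct x, y; simpl; auto; lia. Qed.
Lemma nmin_r x y : nle (nmin x y) y.
Proof. destruct x, y; simpl; auto; lia. Qed.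
Lemma nmax_l x y : nle x (nmax x y).
Proof. destruct x, y; simpl; auto; lia. Qed.
Lemma nmax_r x y : nle y (nmax x y).
Proof. destruct x, y; simpl; auto; lia. Qed.
Lemma nmax_le x y z : nle x z -> nle y z -> nle (nmax x y) z.
Proof. destruct x, y, z; simpl; auto; lia. Qed.

Lemma nle_mono_min a b c d : nle a b -> nle c d -> nle (nmin a c) (nmin b d).
Proof. intros. apply nle_min. eapply nle_trans; [apply nmin_l|]; auto.
  eapply nle_trans; [apply nmin_r|]; auto. Qed.
Lemma nle_mono_max a b c d : nle a b -> nle c d -> nle (nmax a c) (nmax b d).
Proof. intros. apply nmax_le. eapply nle_trans; [|apply nmax_l]; auto.
  eapply nle_trans; [|apply nmax_r]; auto. Qed.

Lemma warp_exceed (f : warp) w : ~ nle (f Om) w -> exists n, ~ nle (f (Fin n)) w.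
Proof.
  intros H. apply NNPP; intro Hn. apply H. apply (proj2 (wsup f)).
  intro n. apply NNPP. intro Hc. apply Hn. eauto.
Qed.

Lemma nle_not x y : ~ nle x y -> nle y x.
Proof. intros H. destruct (nle_total x y); tauto. Qed.

Definition wmeet (f g : warp) : warp.
Proof.
  refine (@Warp (fun x => nmin (f x) (g x)) _ _ _).
  - intros x y Hxy. apply nle_mono_min; apply wmono; auto.
  - rewrite !wzero. reflexivity.
  - split.
    + intro n. apply nle_mono_min; apply wmono; exact I.
    + intros w Hw. apply NNPP. intro Hc.
      assert (H1 : ~ nle (f Om) w).
      { intro H; apply Hc. eapply nle_trans; [apply nmin_l|]; auto. }
      assert (H2 : ~ nle (g Om) w).
      { intro H; apply Hc. eapply nle_trans; [apply nmin_r|]; auto. }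
      destruct (warp_exceed f w H1) as [n1 Hn1].
      destruct (warp_exceed g w H2) as [n2 Hn2].
      pose (m := Nat.max n1 n2).
      assert (A : nle (f (Fin n1)) (f (Fin m))) by (apply wmono; simpl; lia).
      assert (B : nle (g (Fin n2)) (g (Fin m))) by (apply wmono; simpl; lia).
      specialize (Hw m). simpl in Hw.
      destruct (nle_total (f (Fin m)) (g (Fin m))) as [C|C].
      * apply Hn1. eapply nle_trans; [exact A|]. eapply nle_trans; [|exact Hw].
        apply nle_min; auto. destruct (f (Fin m)); simpl; auto; lia.
      * apply Hn2. eapply nle_trans; [exact B|]. eapply nle_trans; [|exact Hw].
        apply nle_min; auto. destruct (g (Fin m)); simpl; auto; lia.
Defined.

Definition wjoin (f g : warp) : warp.
Proof.
  refine (@Warp (fun x => nmax (f x) (g x)) _ _ _).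
  - intros x y Hxy. apply nle_mono_max; apply wmono; auto.
  - rewrite !wzero. reflexivity.
  - split.
    + intro n. apply nle_mono_max; apply wmono; exact I.
    + intros w Hw. apply nmax_le.
      * apply (proj2 (wsup f)). intro n. eapply nle_trans; [apply nmax_l|]. apply Hw.
      * apply (proj2 (wsup g)). intro n. eapply nle_trans; [apply nmax_r|]. apply Hw.
Defined.

(* The residuals, specified by the defining Galois property:
   f <= h / g  <->  f g <= h  <->  g <= f \ h *)
Definition is_ldiv (ldiv : warp -> warp -> warp) : Prop :=
  forall f g h : warp, wle g (ldiv f h) <-> comp_le f g h.
Definition is_rdiv (rdiv : warp -> warp -> warp) : Prop :=
  forall f g h : warp, wle f (rdiv h g) <-> comp_le f g h.

(* Main.v *)
Require Import Defs.
From Stdlib Require Import Arith Lia Classical FunctionalExtensionality ProofIrrelevance.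

Lemma nle_refl x : nle x x.
Proof. destruct x; simpl; auto. Qed.
Lemma nle_antisym x y : nle x y -> nle y x -> x = y.
Proof. destruct x, y; simpl; intros; try tauto; f_equal; lia. Qed.
Lemma nle0 x : nle (Fin 0) x.
Proof. destruct x; simpl; auto; lia. Qed.
Lemma nmin_cases x y : nmin x y = x \/ nmin x y = y.
Proof. destruct x, y; simpl; auto. destruct (Nat.min_dec n n0) as [e|e]; rewrite e; auto. Qed.
Lemma nmax_cases x y : nmax x y = x \/ nmax x y = y.
Proof. destruct x, y; simpl; auto. destruct (Nat.max_dec n n0) as [e|e]; rewrite e; auto. Qed.

Lemma warp_ext (f g : warp) : (forall x, f x = g x) -> f = g.
Proof.
  destruct f as [f fm fz fs], g as [g gm gz gs]; simpl; intro H.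
  assert (f = g) by (apply functional_extensionality; auto). subst g.
  f_equal; apply proof_irrelevance.
Qed.

Lemma wle_fin (f g : warp) : (forall n, nle (f (Fin (S n))) (g (Fin (S n)))) -> wle f g.
Proof.
  intros H.
  assert (Hf : forall m, nle (f (Fin m)) (g (Fin m))).
  { intros [|m]; auto. rewrite !wzero; simpl; lia. }
  intros [m|]; auto.
  apply (proj2 (wsup f)). intro m. eapply nle_trans; [apply Hf|]. apply (proj1 (wsup g)).
Qed.

Lemma wle_antisym (f g : warp) : wle f g -> wle g f -> f = g.
Proof. intros; apply warp_ext; intro x; apply nle_antisym; auto. Qed.

Definition stepf (n : nat) (y : nbar) (z : nbar) : nbar :=
  match z with Fin m => if S n <=? m then y else Fin 0 | Om => y end.

Lemma step_cases n y x : (nle (Fin (S n)) x /\ stepf n y x = y) \/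
  (~ nle (Fin (S n)) x /\ stepf n y x = Fin 0).
Proof.
  destruct x as [m|]; unfold stepf.
  - destruct (S n <=? m) eqn:E.
    + left; split; [|reflexivity]. apply Nat.leb_le in E; simpl; lia.
    + right; split; [|reflexivity]. apply Nat.leb_nle in E; simpl; lia.
  - left; split; [exact I|reflexivity].
Qed.

Lemma stepf_mono n y x x' : nle x x' -> nle (stepf n y x) (stepf n y x').
Proof.
  intros H.
  destruct (step_cases n y x) as [[A E]|[A E]]; rewrite E;
  destruct (step_cases n y x') as [[B F]|[B F]]; rewrite F; try apply nle_refl; try apply nle0.
  exfalso; apply B; eapply nle_trans; eauto.
Qed.

Definition step (n : nat) (y : nbar) : warp.
Proof.
  refine (@Warp (stepf n y) _ _ _).
  - apply stepf_mono.
  - reflexivity.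
  - split.
    + intro m; cbv beta. destruct (step_cases n y (Fin m)) as [[_ E]|[_ E]]; rewrite E; [apply nle_refl|apply nle0].
    + intros w Hw. specialize (Hw (S n)). cbv beta in Hw.
      destruct (step_cases n y (Fin (S n))) as [[_ E]|[B E]].
      * rewrite E in Hw; exact Hw.
      * exfalso; apply B; simpl; lia.
Defined.

Lemma step_at n y : step n y (Fin (S n)) = y.
Proof. change (stepf n y (Fin (S n)) = y). unfold stepf. rewrite Nat.leb_refl. reflexivity. Qed.

Section S.
Variables (ldiv rdiv : warp -> warp -> warp) (Hl : is_ldiv ldiv) (Hr : is_rdiv rdiv).

Lemma ldiv_spec (f h : warp) : comp_le f (ldiv f h) h.
Proof. apply Hl. intro; apply nle_refl. Qed.

Lemma ldiv_ge (f h : warp) n y : nle (f y) (h (Fin (S n))) -> nle y (ldiv f h (Fin (S n))).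
Proof.
  intros H. assert (W : wle (step n y) (ldiv f h)).
  { apply Hl. intro z. destruct (step_cases n y z) as [[Hz E]|[_ E]]; simpl in E |- *; rewrite E.
    - eapply nle_trans; [exact H|]. apply wmono; auto.
    - rewrite wzero; apply nle0. }
  specialize (W (Fin (S n))). rewrite step_at in W. exact W.
Qed.

Lemma rdiv_spec (h g : warp) : comp_le (rdiv h g) g h.
Proof. apply Hr. intro; apply nle_refl. Qed.

Lemma rdiv_ge (h g : warp) n y : (forall z, nle (Fin (S n)) (g z) -> nle y (h z)) ->
  nle y (rdiv h g (Fin (S n))).
Proof.
  intros H. assert (W : wle (step n y) (rdiv h g)).
  { apply Hr. intro z. destruct (step_cases n y (g z)) as [[Hz E]|[_ E]]; simpl in E |- *; rewrite E.
    - auto.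
    - apply nle0. }
  specialize (W (Fin (S n))). rewrite step_at in W. exact W.
Qed.
End S.

Lemma wmeet_val g h x : wmeet g h x = nmin (g x) (h x).
Proof. reflexivity. Qed.
Lemma wjoin_val g h x : wjoin g h x = nmax (g x) (h x).
Proof. reflexivity. Qed.

(* ldiv f g = f \ g ; rdiv f g = f / g *)
Theorem lemma2p2 (ldiv rdiv : warp -> warp -> warp)
  (Hl : is_ldiv ldiv) (Hr : is_rdiv rdiv) (f g h : warp) :
  ldiv f (wmeet g h) = wmeet (ldiv f g) (ldiv f h) /\
  ldiv (wmeet g h) f = wjoin (ldiv g f) (ldiv h f) /\
  ldiv f (wjoin g h) = wjoin (ldiv f g) (ldiv f h) /\
  ldiv (wjoin g h) f = wmeet (ldiv g f) (ldiv h f) /\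
  rdiv (wmeet g h) f = wmeet (rdiv g f) (rdiv h f) /\
  rdiv f (wmeet g h) = wjoin (rdiv f g) (rdiv f h) /\
  rdiv (wjoin g h) f = wjoin (rdiv g f) (rdiv h f) /\
  rdiv f (wjoin g h) = wmeet (rdiv f g) (rdiv f h).
Proof.
  pose proof (ldiv_spec ldiv Hl) as LS. pose proof (ldiv_ge ldiv Hl) as LG.
  pose proof (rdiv_spec rdiv Hr) as RS. pose proof (rdiv_ge rdiv Hr) as RG.
  repeat split; apply wle_antisym; apply wle_fin; intro n;
    rewrite ?wmeet_val, ?wjoin_val.
  - specialize (LS f (wmeet g h) (Fin (S n))). rewrite wmeet_val in LS.
    apply nle_min; apply LG; (eapply nle_trans; [exact LS|]); [apply nmin_l|apply nmin_r].
  - apply LG. rewrite wmeet_val. apply nle_min.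
    + eapply nle_trans; [apply wmono, nmin_l|]. apply LS.
    + eapply nle_trans; [apply wmono, nmin_r|]. apply LS.
  - set (y := ldiv (wmeet g h) f (Fin (S n))).
    assert (H := LS (wmeet g h) f (Fin (S n))). rewrite wmeet_val in H. fold y in H.
    destruct (nmin_cases (g y) (h y)) as [E|E]; rewrite E in H.
    + eapply nle_trans; [|apply nmax_l]. apply LG; auto.
    + eapply nle_trans; [|apply nmax_r]. apply LG; auto.
  - apply LG. rewrite wmeet_val.
    destruct (nmax_cases (ldiv g f (Fin (S n))) (ldiv h f (Fin (S n)))) as [E|E]; rewrite E.
    + eapply nle_trans; [apply nmin_l|]. apply LS.
    + eapply nle_trans; [apply nmin_r|]. apply LS.
  - assert (H := LS f (wjoin g h) (Fin (S n))). rewrite wjoin_val in H.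
    destruct (nmax_cases (g (Fin (S n))) (h (Fin (S n)))) as [E|E]; rewrite E in H.
    + eapply nle_trans; [|apply nmax_l]. apply LG; auto.
    + eapply nle_trans; [|apply nmax_r]. apply LG; auto.
  - apply LG. rewrite wjoin_val.
    destruct (nmax_cases (ldiv f g (Fin (S n))) (ldiv f h (Fin (S n)))) as [E|E]; rewrite E.
    + eapply nle_trans; [apply LS|]. apply nmax_l.
    + eapply nle_trans; [apply LS|]. apply nmax_r.
  - assert (H := LS (wjoin g h) f (Fin (S n))). rewrite wjoin_val in H.
    apply nle_min; apply LG; (eapply nle_trans; [|exact H]); [apply nmax_l|apply nmax_r].
  - apply LG. rewrite wjoin_val. apply nmax_le.
    + eapply nle_trans; [apply wmono, nmin_l|]. apply LS.
    + eapply nle_trans; [apply wmono, nmin_r|]. apply LS.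
  - apply nle_min; apply RG; intros z Hz;
      (eapply nle_trans; [apply wmono, Hz|]);
      (eapply nle_trans; [apply RS|]); rewrite wmeet_val; [apply nmin_l|apply nmin_r].
  - apply RG; intros z Hz. rewrite wmeet_val. apply nle_min.
    + eapply nle_trans; [apply nmin_l|]. eapply nle_trans; [apply wmono, Hz|]. apply RS.
    + eapply nle_trans; [apply nmin_r|]. eapply nle_trans; [apply wmono, Hz|]. apply RS.
  - set (y := rdiv f (wmeet g h) (Fin (S n))).
    destruct (classic (forall z, nle (Fin (S n)) (g z) -> nle y (f z))) as [A|A].
    { eapply nle_trans; [|apply nmax_l]. apply RG; auto. }
    destruct (classic (forall z, nle (Fin (S n)) (h z) -> nle y (f z))) as [B|B].
    { eapply nle_trans; [|apply nmax_r]. apply RG; auto. }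
    exfalso.
    apply not_all_ex_not in A as [z1 A]. apply imply_to_and in A as [A1 A2].
    apply not_all_ex_not in B as [z2 B]. apply imply_to_and in B as [B1 B2].
    assert (K : nle y (f (nmax z1 z2))).
    { eapply nle_trans; [|apply RS]. apply wmono. rewrite wmeet_val. apply nle_min.
      - eapply nle_trans; [exact A1|]. apply wmono, nmax_l.
      - eapply nle_trans; [exact B1|]. apply wmono, nmax_r. }
    destruct (nmax_cases z1 z2) as [E|E]; rewrite E in K; auto.
  - destruct (nmax_cases (rdiv f g (Fin (S n))) (rdiv f h (Fin (S n)))) as [E|E]; rewrite E;
      apply RG; intros z Hz; rewrite wmeet_val in Hz.
    + eapply nle_trans; [apply wmono|apply RS]. eapply nle_trans; [exact Hz|apply nmin_l].
    + eapply nle_trans; [apply wmono|apply RS]. eapply nle_trans; [exact Hz|apply nmin_r].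
  - set (y := rdiv (wjoin g h) f (Fin (S n))).
    destruct (classic (forall z, nle (Fin (S n)) (f z) -> nle y (g z))) as [A|A].
    { eapply nle_trans; [|apply nmax_l]. apply RG; auto. }
    destruct (classic (forall z, nle (Fin (S n)) (f z) -> nle y (h z))) as [B|B].
    { eapply nle_trans; [|apply nmax_r]. apply RG; auto. }
    exfalso.
    apply not_all_ex_not in A as [z1 A]. apply imply_to_and in A as [A1 A2].
    apply not_all_ex_not in B as [z2 B]. apply imply_to_and in B as [B1 B2].
    assert (K : nle y (wjoin g h (nmin z1 z2))).
    { eapply nle_trans; [|apply RS]. apply wmono.
      destruct (nmin_cases z1 z2) as [E|E]; rewrite E; auto. }
    rewrite wjoin_val in K.
    destruct (nmax_cases (g (nmin z1 z2)) (h (nmin z1 z2))) as [E|E]; rewrite E in K.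
    + apply A2. eapply nle_trans; [exact K|]. apply wmono, nmin_l.
    + apply B2. eapply nle_trans; [exact K|]. apply wmono, nmin_r.
  - destruct (nmax_cases (rdiv g f (Fin (S n))) (rdiv h f (Fin (S n)))) as [E|E]; rewrite E;
      apply RG; intros z Hz; rewrite wjoin_val.
    + eapply nle_trans; [|apply nmax_l]. eapply nle_trans; [apply wmono, Hz|apply RS].
    + eapply nle_trans; [|apply nmax_r]. eapply nle_trans; [apply wmono, Hz|apply RS].
  - apply nle_min; apply RG; intros z Hz;
      (eapply nle_trans; [apply wmono|apply RS]); rewrite wjoin_val;
      (eapply nle_trans; [exact Hz|]); [apply nmax_l|apply nmax_r].
  - apply RG; intros z Hz. rewrite wjoin_val in Hz.
    destruct (nmax_cases (g z) (h z)) as [E|E]; rewrite E in Hz.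
    + eapply nle_trans; [apply nmin_l|]. eapply nle_trans; [apply wmono, Hz|apply RS].
    + eapply nle_trans; [apply nmin_r|]. eapply nle_trans; [apply wmono, Hz|apply RS].
Qed.
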